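(* Let $\rho\in[0,1)$. Then \[ (1-3\rho+2\rho^{n+1})n+3\rho^{n+1}\ge3\rho\quad\text{for all integers } n\ge1 \] holds if and only if $\rho\in[0,\tfrac15]$. *)

(* Defs.v *)
From Stdlib Require Import Reals Lra Lia.

(* Main.v *)
Require Import Defs.
From Stdlib Require Import Reals Lra Lia.
Open Scope R_scope.

Theorem lemma4p2 (rho : R) (Hrho : 0 <= rho < 1) :
  (forall n : nat, (1 <= n)%nat ->
     (1 - 3 * rho + 2 * rho ^ (n + 1)) * INR n + 3 * rho ^ (n + 1) >= 3 * rho)
  <-> (0 <= rho <= 1 / 5).
Proof.
  split.
  - intros H. specialize (H 1%nat (le_n 1)). simpl in H. nra.
  - intros Hr n Hn.
    destruct (Nat.eq_dec n 1) as [->|Hn2].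
    + simpl. nra.
    + assert (HI : 2 <= INR n).
      { replace 2 with (INR 2) by (simpl; lra). apply le_INR. lia. }
      assert (Hp : 0 <= rho ^ (n + 1)) by (apply pow_le; lra).
      nra.
Qed.
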